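(* Assume the variety $\mathbf K$ axiomatized by $E$ satisfies (IT), is coherent and has the $\forall$-factorization property. Let $X,C$ be finite sets, $\mathcal A^*\in\mathsf{Sub}_r(\mathbf F(X)^*\times\mathbf F(C)^* )$, and let $\mathcal B_1^*,\dots,\mathcal B_n^*\in\mathsf{Sub}_r(\mathbf F(X)^* )$ be such that (a) $\pi_{\mathbf F(X)^*}^{-1}(\mathcal B_i^* )\le\mathcal A^*$ for all $i$, and (b) for every $\mathcal D^*\in\mathsf{Sub}_r(\mathbf F(X)^* )$ with $\pi_{\mathbf F(X)^*}^{-1}(\mathcal D^* )\le\mathcal A^*$ there is $i$ with $\mathcal D^*\le\mathcal B_i^*$. Then a homomorphism $\sigma:\mathbf F(X)\to\mathbf F(Z)$ is a $C$-unifier of $(\mathcal A,C)$ iff it is a unifier of some $\mathcal B_i$; that is, $U^{svr}_E(\mathcal A,C)=U_E(\mathcal B_1)\cup\dots\cup U_E(\mathcal B_n)$, as preordered sets (with the same preorder).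
   Context: $\mathbf F(Y)$ is the free $E$-algebra on finite $Y$; $\mathsf{Alg}^{op}_{fp}(E)$ is the opposite of the category of finitely presented $E$-algebras ($\mathcal B^*,f^*$ formal duals). $\mathsf{Sub}_r(V)$ is the poset of regular subobjects, $g^{-1}$ pullback, $\pi$ projections; regular subobjects of $\mathcal B^*$ correspond to finitely presented quotients of $\mathcal B$. (IT): whenever $f:\mathcal A\to\mathcal B$ is a homomorphism and $g:\mathcal A\to\mathcal C$ an injective homomorphism, there exist a homomorphism $h:\mathcal C\to\mathcal E$ and injective $h':\mathcal B\to\mathcal E$ with $h'f=hg$. Coherent: finitely generated subalgebras of finitely presented algebras are finitely presented. $\forall$-factorization property: for all objects $V,W$ of $\mathsf{Alg}^{op}_{fp}(E)$ and $T\in\mathsf{Sub}_r(V\times W)$ there are finitely many $B_1,\dots,B_n\in\mathsf{Sub}_r(W)$ with $\pi_W^{-1}(B_i)\le T$ and such that every $D\in\mathsf{Sub}_r(W)$ with $\pi_W^{-1}(D)\le T$ satisfies $D\le B_i$ for some $i$. A $C$-unifier of $(\mathcal A,C)$ is a homomorphism $\sigma:\mathbf F(X)\to\mathbf F(Z)$ with $\sigma^*\times1:\mathbf F(Z)^*\times\mathbf F(C)^*\to\mathbf F(X)^*\times\mathbf F(C)^*$ factoring through $\mathcal A^*\hookrightarrow\mathbf F(X)^*\times\mathbf F(C)^*$; $U^{svr}_E(\mathcal A,C)$ is the set of these. A unifier of $\mathcal B_i$ (case $C=\emptyset$) is a homomorphism $\sigma:\mathbf F(X)\to\mathbf F(Z)$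 factoring through the quotient map $\mathbf F(X)\to\mathcal B_i$; $U_E(\mathcal B_i)$ is the set of these. In both sets, $\gamma:\mathbf F(X)\to\mathbf F(W)$ is below $\sigma:\mathbf F(X)\to\mathbf F(Z)$ iff $k\circ\sigma=\gamma$ for some homomorphism $k:\mathbf F(Z)\to\mathbf F(W)$. *)

(* Defs.v *)
From Stdlib Require Import List ClassicalEpsilon.
From mathcomp Require Import all_boot.

Set Implicit Arguments.
Unset Strict Implicit.
Unset Printing Implicit Defensive.

Record signature := Signature { sym :> Type; arity : sym -> nat }.

Inductive term (Sg : signature) (V : Type) : Type :=
| Var : V -> term Sg V
| Op : forall o : Sg, ('I_(arity o) -> term Sg V) -> term Sg V.
Arguments Var {Sg V}.
Arguments Op {Sg V}.

Fixpoint subst (Sg : signature) (V W : Type) (s : V -> term Sg W)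
  (t : term Sg V) : term Sg W :=
  match t with
  | Var x => s x
  | Op o args => Op o (fun i => subst s (args i))
  end.

Definition tmap (Sg : signature) (V W : Type) (f : V -> W) (t : term Sg V)
  : term Sg W := subst (fun x => Var (f x)) t.

Definition teq (Sg : signature) (V : Type) := (term Sg V * term Sg V)%type.

Definition eqmap (Sg : signature) (V W : Type) (f : V -> W) (p : teq Sg V)
  : teq Sg W := (tmap f p.1, tmap f p.2).

Definition theory (Sg : signature) := teq Sg nat -> Prop.

Record alg (Sg : signature) := Alg {
  carrier :> Type;
  ops : forall o : Sg, ('I_(arity o) -> carrier) -> carrier }.

Fixpoint eval (Sg : signature) (A : alg Sg) (V : Type) (v : V -> A)
  (t : term Sg V) : A :=
  match t with
  | Var x => v x
  | Op o args => @ops _ A o (fun i => eval v (args i))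
  end.

Definition models (Sg : signature) (E : theory Sg) (A : alg Sg) : Prop :=
  forall e, E e -> forall v : nat -> A, eval v e.1 = eval v e.2.

Record hom (Sg : signature) (A B : alg Sg) := Hom {
  hfun :> A -> B;
  hmorph : forall o (args : 'I_(arity o) -> A),
      hfun (@ops _ A o args) = @ops _ B o (fun i => hfun (args i)) }.

(* deriv E S s t : the pair (s,t) of terms over Y lies in the least
   congruence of the term algebra over Y containing all substitution
   instances of E and all pairs of S; i.e. s = t in F(Y)/Cg(S). *)
Inductive deriv (Sg : signature) (E : theory Sg) (Y : Type)
  (S : list (teq Sg Y)) : term Sg Y -> term Sg Y -> Prop :=
| d_refl t : deriv E S t t
| d_sym s t : deriv E S s t -> deriv E S t s
| d_trans s t u : deriv E S s t -> deriv E S t u -> deriv E S s u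
| d_cong o (a1 a2 : 'I_(arity o) -> term Sg Y) :
    (forall i, deriv E S (a1 i) (a2 i)) -> deriv E S (Op o a1) (Op o a2)
| d_ax e (s : nat -> term Sg Y) : E e -> deriv E S (subst s e.1) (subst s e.2)
| d_hyp p : List.In p S -> deriv E S p.1 p.2.

Definition pres_car (Sg : signature) (E : theory Sg) (Y : Type)
  (S : list (teq Sg Y)) : Type :=
  {P : term Sg Y -> Prop | exists t, P = deriv E S t}.

Definition cls (Sg : signature) (E : theory Sg) (Y : Type)
  (S : list (teq Sg Y)) (t : term Sg Y) : pres_car E S :=
  exist _ (deriv E S t) (ex_intro _ t erefl).

Definition rep (Sg : signature) (E : theory Sg) (Y : Type)
  (S : list (teq Sg Y)) (c : pres_car E S) : term Sg Y :=
  proj1_sig (constructive_indefinite_description _ (proj2_sig c)).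

Definition Pres (Sg : signature) (E : theory Sg) (Y : Type)
  (S : list (teq Sg Y)) : alg Sg :=
  @Alg Sg (pres_car E S)
    (fun o args => cls E S (Op o (fun i => rep (args i)))).

Definition F (Sg : signature) (E : theory Sg) (Y : Type) : alg Sg :=
  Pres E (Y := Y) nil.

Definition fmapF (Sg : signature) (E : theory Sg) (Y Y' : Type) (f : Y -> Y')
  (c : F E Y) : F E Y' := cls E nil (tmap f (rep c)).

Definition IT (Sg : signature) (E : theory Sg) : Prop :=
  forall (A B C : alg Sg), models E A -> models E B -> models E C ->
  forall (f : hom A B) (g : hom A C), injective g ->
  exists (D : alg Sg) (h : hom C D) (h' : hom B D),
    models E D /\ injective h' /\ forall a, h' (f a) = h (g a).

Definition fin_presented (Sg : signature) (E : theory Sg) (A : alg Sg) : Prop :=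
  exists (Y : finType) (S : list (teq Sg Y)) (h : hom (Pres E S) A),
    bijective h.

Inductive gen (Sg : signature) (A : alg Sg) (Y : Type) (a : Y -> A) : A -> Prop :=
| gen_var y : gen a (a y)
| gen_op o (args : 'I_(arity o) -> A) :
    (forall i, gen a (args i)) -> gen a (@ops _ A o args).

(* coherence: finitely generated subalgebras of finitely presented algebras
   are finitely presented (i.e. isomorphic to some F(Y')/Cg(S')) *)
Definition coherent (Sg : signature) (E : theory Sg) : Prop :=
  forall A : alg Sg, models E A -> fin_presented E A ->
  forall (Y : finType) (a : Y -> A),
  exists (Y' : finType) (S' : list (teq Sg Y')) (h : hom (Pres E S') A),
    injective h /\ forall x, gen a x <-> exists p, h p = x.

(* Over an object presented as F(Y)/Cg(S0), a regular subobject is given by a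
   finite set D of extra equations (the quotient F(Y)/Cg(S0 ++ D)).
   sub_le E S0 D1 D2 : D1^* <= D2^*, i.e. the quotient by D2 maps onto the
   quotient by D1 compatibly: Cg(S0 ++ D2) is contained in Cg(S0 ++ D1). *)
Definition sub_le (Sg : signature) (E : theory Sg) (Y : Type)
  (S0 D1 D2 : list (teq Sg Y)) : Prop :=
  forall s t, deriv E (S0 ++ D2) s t -> deriv E (S0 ++ D1) s t.

(* presentation of the coproduct V + W  (the product V^* x W^* in Alg_fp^op) *)
Definition coprod_rel (Sg : signature) (Y1 Y2 : Type)
  (S1 : list (teq Sg Y1)) (S2 : list (teq Sg Y2)) : list (teq Sg (Y1 + Y2)) :=
  map (eqmap inl) S1 ++ map (eqmap inr) S2.

(* forall-factorization property, for V = F(Y1)/Cg(S1), W = F(Y2)/Cg(S2);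
   pi_W^{-1}(D) is the quotient of V + W by the image of D. *)
Definition forall_factorization (Sg : signature) (E : theory Sg) : Prop :=
  forall (Y1 Y2 : finType) (S1 : list (teq Sg Y1)) (S2 : list (teq Sg Y2))
         (T : list (teq Sg (Y1 + Y2))),
  exists Bs : list (list (teq Sg Y2)),
    (forall Bi, List.In Bi Bs ->
       sub_le E (coprod_rel S1 S2) (map (eqmap inr) Bi) T) /\
    (forall D : list (teq Sg Y2),
       sub_le E (coprod_rel S1 S2) (map (eqmap inr) D) T ->
       exists Bi, List.In Bi Bs /\ sub_le E S2 D Bi).

(* the assignment  X + C -> F(Z + C)  underlying sigma + 1 *)
Definition sigma_plus (Sg : signature) (E : theory Sg) (X C Z : Type)
  (sigma : hom (F E X) (F E Z)) (v : X + C) : F E (Z + C) :=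
  match v with
  | inl x => fmapF inl (sigma (cls E nil (Var x)))
  | inr c => cls E nil (Var (inr c))
  end.

(* sigma is a C-unifier of (A, C), A = F(X+C)/Cg(SA): sigma + 1 factors
   through the quotient map F(X + C) -> A. *)
Definition C_unifier (Sg : signature) (E : theory Sg) (X C Z : Type)
  (SA : list (teq Sg (X + C))) (sigma : hom (F E X) (F E Z)) : Prop :=
  forall p, List.In p SA ->
    eval (sigma_plus sigma) p.1 = eval (sigma_plus sigma) p.2.

(* sigma is a unifier of B = F(X)/Cg(SB): sigma factors through F(X) -> B *)
Definition unifier (Sg : signature) (E : theory Sg) (X Z : Type)
  (SB : list (teq Sg X)) (sigma : hom (F E X) (F E Z)) : Prop :=
  forall p, List.In p SB -> sigma (cls E nil p.1) = sigma (cls E nil p.2).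

Definition unif_le (Sg : signature) (E : theory Sg) (X Z W : Type)
  (gamma : hom (F E X) (F E W)) (sigma : hom (F E X) (F E Z)) : Prop :=
  exists k : hom (F E Z) (F E W), forall x, k (sigma x) = gamma x.

(* Main.v *)
Require Import Defs.
From Stdlib Require Import List ClassicalEpsilon FunctionalExtensionality PropExtensionality ProofIrrelevance.
From mathcomp Require Import all_boot.
Set Implicit Arguments.
Unset Strict Implicit.
Unset Printing Implicit Defensive.

Section L.
Variable Sg : signature.
Variable E : theory Sg.

Lemma sig_eq (A : Type) (P : A -> Prop) (x y : sig P) : proj1_sig x = proj1_sig y -> x = y.
Proof. case: x => x px; case: y => y py /= e; subst y; f_equal; apply: proof_irrelevance. Qed.

Lemma cls_eq Y (S : list (teq Sg Y)) s t : cls E S s = cls E S t <-> deriv E S s t.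
Proof.
split.
- move/(f_equal (@proj1_sig _ _)) => /= H; rewrite H; exact: d_refl.
- move=> H; apply: sig_eq => /=.
  apply: functional_extensionality => u; apply: propositional_extensionality; split => H'.
  + exact: d_trans (d_sym H) H'.
  + exact: d_trans H H'.
Qed.

Lemma cls_rep Y (S : list (teq Sg Y)) (c : pres_car E S) : cls E S (rep c) = c.
Proof.
apply: sig_eq => /=; rewrite /rep.
case: (constructive_indefinite_description _ _) => t ht /=; by rewrite ht.
Qed.

Lemma rep_cls Y (S : list (teq Sg Y)) t : deriv E S (rep (cls E S t)) t.
Proof. exact: (cls_eq _ _ _).1 (cls_rep _). Qed.

Lemma ops_cls Y (S : list (teq Sg Y)) o (args : 'I_(arity o) -> term Sg Y) :
  @ops _ (Pres E S) o (fun i => cls E S (args i)) = cls E S (Op o args).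
Proof. apply/cls_eq; apply: d_cong => i; exact: rep_cls. Qed.

Lemma eval_cls_subst Y Y' (S : list (teq Sg Y')) (psi : Y -> term Sg Y') t :
  @eval Sg (Pres E S) Y (fun y => cls E S (psi y)) t = cls E S (subst psi t).
Proof.
elim: t => [x|o args IH] //=.
apply/cls_eq; apply: d_cong => i; rewrite IH; exact: rep_cls.
Qed.

Lemma subst_var Y (t : term Sg Y) : subst Var t = t.
Proof.
elim: t => [x|o args IH] //=; f_equal; apply: functional_extensionality => i; exact: IH.
Qed.

Lemma eval_cls_var Y (S : list (teq Sg Y)) t :
  @eval Sg (Pres E S) Y (fun y => cls E S (Var y)) t = cls E S t.
Proof. by rewrite eval_cls_subst subst_var. Qed.

Lemma hom_eval (A B : alg Sg) (k : hom A B) V (v : V -> A) t :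
  k (eval v t) = eval (fun x => k (v x)) t.
Proof.
elim: t => [x|o args IH] //=; rewrite hmorph; f_equal;
apply: functional_extensionality => i; exact: IH.
Qed.

Lemma eval_subst (A : alg Sg) V W (v : W -> A) (psi : V -> term Sg W) t :
  eval v (subst psi t) = eval (fun x => eval v (psi x)) t.
Proof.
elim: t => [x|o args IH] //=; f_equal; apply: functional_extensionality => i; exact: IH.
Qed.

Lemma eval_ext (A : alg Sg) V (v1 v2 : V -> A) t :
  (forall x, v1 x = v2 x) -> eval v1 t = eval v2 t.
Proof. move=> H; have -> // : v1 = v2; exact: functional_extensionality. Qed.

Lemma subst_comp V W U (psi : W -> term Sg U) (s : V -> term Sg W) t :
  subst psi (subst s t) = subst (fun x => subst psi (s x)) t.
Proof.
elim: t => [x|o args IH] //=; f_equal; apply: functional_extensionality => i; exact: IH.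
Qed.

Lemma sound (A : alg Sg) Y (S : list (teq Sg Y)) (v : Y -> A) :
  models E A -> (forall p, In p S -> eval v p.1 = eval v p.2) ->
  forall s t, deriv E S s t -> eval v s = eval v t.
Proof.
move=> HA HS s t; elim => {s t}.
- by [].
- by move=> s t _ ->.
- by move=> s t u _ -> _ ->.
- move=> o a1 a2 _ IH /=; f_equal; apply: functional_extensionality => i; exact: IH.
- move=> e s0 He; rewrite !eval_subst; exact: HA.
- move=> p Hp; exact: HS.
Qed.

Lemma Pres_models Y (S : list (teq Sg Y)) : models E (Pres E S).
Proof.
move=> e He v.
have Hv : v = fun n => cls E S (rep (v n)).
  by apply: functional_extensionality => n; rewrite cls_rep.
rewrite Hv !eval_cls_subst; apply/cls_eq; exact: d_ax.
Qed.

Lemma lift_ex (A : alg Sg) Y (S : list (teq Sg Y)) (v : Y -> A) :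
  models E A -> (forall p, In p S -> eval v p.1 = eval v p.2) ->
  exists k : hom (Pres E S) A, forall t, k (cls E S t) = eval v t.
Proof.
move=> HA HS.
have Hr : forall t, eval v (rep (cls E S t)) = eval v t.
  move=> t; apply: (sound HA HS); exact: rep_cls.
unshelve eexists (@Hom _ (Pres E S) A (fun c => eval v (rep c)) _).
- move=> o args /=. by rewrite Hr.
- by move=> t /=.
Qed.

Lemma hom_cls (A : alg Sg) Y (S : list (teq Sg Y)) (k : hom (Pres E S) A) t :
  k (cls E S t) = eval (fun y => k (cls E S (Var y))) t.
Proof. by rewrite -eval_cls_var hom_eval. Qed.

Lemma deriv_mono Y (S S2 : list (teq Sg Y)) :
  (forall p, In p S -> deriv E S2 p.1 p.2) ->
  forall s t, deriv E S s t -> deriv E S2 s t.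
Proof.
move=> HS s t; elim => {s t}.
- move=> t; exact: d_refl.
- move=> s t _ H; exact: d_sym.
- move=> s t u _ H1 _ H2; exact: d_trans H1 H2.
- move=> o a1 a2 _ IH; exact: d_cong.
- move=> e s0 He; exact: d_ax.
- move=> p Hp; exact: HS.
Qed.

Lemma deriv_subst Y Y2 (S : list (teq Sg Y)) (S2 : list (teq Sg Y2)) (psi : Y -> term Sg Y2) :
  (forall p, In p S -> deriv E S2 (subst psi p.1) (subst psi p.2)) ->
  forall s t, deriv E S s t -> deriv E S2 (subst psi s) (subst psi t).
Proof.
move=> HS s t; elim => {s t}.
- move=> t; exact: d_refl.
- move=> s t _ H; exact: d_sym.
- move=> s t u _ H1 _ H2; exact: d_trans H1 H2.
- move=> o a1 a2 _ IH /=; exact: d_cong.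
- move=> e s0 He; rewrite !subst_comp; exact: d_ax.
- move=> p Hp; exact: HS.
Qed.

Lemma gen_eval (A : alg Sg) Y (a : Y -> A) x : gen a x -> exists u, eval a u = x.
Proof.
elim => [y | o args _ IH]; first by exists (Var y).
pose Hc := fun i => constructive_indefinite_description _ (IH i).
exists (Op o (fun i => proj1_sig (Hc i))) => /=; f_equal.
apply: functional_extensionality => i; exact: proj2_sig (Hc i).
Qed.

End L.

Lemma In_map (A B : Type) (f : A -> B) x (l : seq A) : In x l -> In (f x) (map f l).
Proof. elim: l => //= y l IH [->|H]; [left|right] => //; exact: IH. Qed.

Lemma In_map_inv (A B : Type) (f : A -> B) y (l : seq A) :
  In y (map f l) -> exists x, y = f x /\ In x l.
Proof.
elim: l => //= x l IH [<-|H]; first by exists x; split => //; left.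
have [z [-> Hz]] := IH H; by exists z; split => //; right.
Qed.

Lemma In_cat (A : Type) x (l1 l2 : seq A) : In x (l1 ++ l2) <-> In x l1 \/ In x l2.
Proof.
elim: l1 => [|y l1 IH] /=; first by split => [H|[[]|]]; [right|].
rewrite IH; tauto.
Qed.

Lemma mem_In (A : eqType) (x : A) (s : seq A) : x \in s -> In x s.
Proof.
elim: s => //= y s IH; rewrite in_cons => /orP [/eqP ->|H]; [left|right; exact: IH] => //.
Qed.
Theorem mainTheorem9 (Sg : signature) (E : theory Sg)
  (HIT : IT E) (Hcoh : coherent E) (Hfact : forall_factorization E)
  (X C : finType) (SA : list (teq Sg (X + C)))
  (n : nat) (B : 'I_n -> list (teq Sg X))
  (Ha : forall i, sub_le E nil (map (eqmap inl) (B i)) SA)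
  (Hb : forall D : list (teq Sg X),
      sub_le E nil (map (eqmap inl) D) SA -> exists i, sub_le E nil D (B i)) :
  forall (Z : finType) (sigma : hom (F E X) (F E Z)),
    C_unifier SA sigma <-> exists i : 'I_n, unifier (B i) sigma.
Proof.
move=> Z sigma.
pose a : X -> F E Z := fun x => sigma (cls E nil (Var x)).
have Hsa : forall u, sigma (cls E nil u) = eval a u.
  by move=> u; rewrite (hom_cls sigma).
have HFm : forall (Y : Type), models E (F E Y) := fun Y => @Pres_models Sg E Y nil.
have [M HM] : exists M : hom (F E Z) (F E (Z + C)), forall c, M c = fmapF inl c.
  have [k Hk] := @lift_ex Sg E (F E (Z + C)) Z nil (fun z : Z => cls E nil (Var (inl z : Z + C)))
    (HFm _) (fun p (Hp : In p nil) => match Hp with end).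
  exists k => c; rewrite /fmapF -{1}(cls_rep c) Hk eval_cls_subst //.
split; last first.
- case=> i Hu p Hp.
  have Hinl : forall t, eval (sigma_plus sigma) (tmap inl t) = M (sigma (cls E nil t)).
    move=> t; rewrite /tmap eval_subst Hsa hom_eval /=.
    apply: (@eval_ext Sg (F E (Z + C))) => x; by rewrite HM.
  apply: (@sound Sg E _ _ (map (eqmap inl) (B i))).
  + exact: HFm.
  + move=> q Hq; have [r [-> Hr]] := In_map_inv Hq; rewrite /=; rewrite !Hinl; congr (M _); exact: Hu.
  + apply: (Ha i); exact: d_hyp.
- move=> Hcu.
  have FPZ : fin_presented E (F E Z).
    exists Z, nil, (@Hom Sg (F E Z) (F E Z) id (fun _ _ => erefl)); by exists id.
  have [Y' [S' [h [hinj himg]]]] := Hcoh (F E Z) (HFm Z) FPZ X a.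
  have Hpsi : forall y : Y', exists t, eval a t = h (cls E S' (Var y)).
    move=> y; apply: gen_eval; apply/himg; by exists (cls E S' (Var y)).
  pose psi y := proj1_sig (constructive_indefinite_description _ (Hpsi y)).
  have Hpsi' : forall y, eval a (psi y) = h (cls E S' (Var y)).
    move=> y; exact: proj2_sig (constructive_indefinite_description _ (Hpsi y)).
  have Hphi : forall x, exists t, h (cls E S' t) = a x.
    move=> x; have [p Hp] := (himg (a x)).1 (gen_var a x).
    by exists (rep p); rewrite cls_rep.
  pose phi x := proj1_sig (constructive_indefinite_description _ (Hphi x)).
  have Hphi' : forall x, h (cls E S' (phi x)) = a x.
    move=> x; exact: proj2_sig (constructive_indefinite_description _ (Hphi x)).
  have Hh : forall t, h (cls E S' t) = eval (fun y => h (cls E S' (Var y))) t.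
    move=> t; exact: hom_cls.
  have Hpsi_t : forall t, eval a (subst psi t) = h (cls E S' t).
    move=> t; rewrite eval_subst Hh; apply: eval_ext => y; exact: Hpsi'.
  have Hphi_u : forall u, h (cls E S' (subst phi u)) = eval a u.
    move=> u; rewrite Hh eval_subst; apply: eval_ext => x; by rewrite -Hh Hphi'.
  pose D := map (fun x => (Var x, subst psi (phi x))) (enum X)
            ++ map (fun p => (subst psi p.1, subst psi p.2)) S'.
  have HDk : forall p, In p D -> eval a p.1 = eval a p.2.
    move=> p /In_cat [Hp|Hp].
    + have [x [-> _]] := In_map_inv Hp; rewrite /=.
      by rewrite Hpsi_t Hphi'.
    + have [q [-> Hq]] := In_map_inv Hp; rewrite /= !Hpsi_t; congr (h _); apply/cls_eq; exact: d_hyp.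
  have Hinj : forall u v, eval a u = eval a v -> deriv E D u v.
    move=> u v Huv.
    have H1 : deriv E S' (subst phi u) (subst phi v).
      by apply/cls_eq/hinj; rewrite !Hphi_u.
    have H2 : deriv E D (subst psi (subst phi u)) (subst psi (subst phi v)).
      apply: deriv_subst H1 => p Hp; apply: (@d_hyp _ _ _ _ (subst psi p.1, subst psi p.2)).
      apply/In_cat; right; exact: (In_map (fun p => (subst psi p.1, subst psi p.2)) Hp).
    have H3 : forall w, deriv E D w (subst psi (subst phi w)).
      elim => [x|o args IH] /=.
      * apply: (@d_hyp _ _ _ _ (Var x, subst psi (phi x))).
        apply/In_cat; left; apply: (In_map (fun x => (Var x, subst psi (phi x)))).
        apply: mem_In; exact: mem_enum.
      * apply: d_cong => i; exact: IH.
    exact: d_trans (H3 u) (d_trans H2 (d_sym (H3 v))).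
  have [g Hg] := @lift_ex Sg E (F E Z) X D a (HFm Z) HDk.
  have ginj : injective g.
    move=> c1 c2 H; rewrite -(cls_rep c1) -(cls_rep c2); apply/cls_eq/Hinj.
    by rewrite -!Hg !cls_rep.
  have HfD : forall p, In p D ->
      @eval Sg (Pres E (map (eqmap inl) D)) X (fun x => cls E (map (eqmap inl) D) (Var (inl x : X + C))) p.1
      = @eval Sg (Pres E (map (eqmap inl) D)) X (fun x => cls E (map (eqmap inl) D) (Var (inl x : X + C))) p.2.
    move=> p Hp; rewrite !eval_cls_subst; apply/cls_eq.
    exact: (@d_hyp _ _ _ _ (eqmap inl p)) (In_map (eqmap inl) Hp).
  have [f Hf] := @lift_ex Sg E (Pres E (map (eqmap inl) D)) X D _ (@Pres_models Sg E _ _) HfD.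
  have [Dalg [h_ [h' [HmD [h'inj Hcomm]]]]] :=
    HIT _ _ _ (@Pres_models Sg E X D) (@Pres_models Sg E _ _) (HFm Z) f g ginj.
  pose w := fun zc : X + C => h' (cls E (map (eqmap inl) D) (Var zc)).
  pose vK := fun zc : Z + C => match zc with
                | inl z => h_ (cls E nil (Var z))
                | inr c => h' (cls E (map (eqmap inl) D) (Var (inr c : X + C))) end.
  have [K HK] := @lift_ex Sg E Dalg (Z + C) nil vK HmD (fun p (Hp : In p nil) => match Hp with end).
  have HKM : forall c, K (fmapF inl c) = h_ c.
    move=> c; rewrite /fmapF HK /tmap eval_subst /=.
    by rewrite -(hom_eval h_ (fun y => cls E nil (Var y))) eval_cls_var cls_rep.
  have Hw : forall zc, K (sigma_plus sigma zc) = w zc.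
    case=> [x|c] /=.
    + rewrite HKM (_ : sigma (cls E nil (Var x)) = g (cls E D (Var x))); last by rewrite Hg.
      by rewrite -Hcomm Hf.
    + by rewrite HK.
  have Hhw : forall t, h' (cls E (map (eqmap inl) D) t) = eval w t.
    move=> t; exact: hom_cls.
  have HsubD : sub_le E nil (map (eqmap inl) D) SA.
    move=> s t /=; apply: deriv_mono => p Hp.
    apply/cls_eq/h'inj; rewrite !Hhw.
    have -> : w = fun zc => K (sigma_plus sigma zc).
      by apply: functional_extensionality => zc; rewrite Hw.
    by rewrite -!hom_eval (Hcu p Hp).
  have [i Hi] := Hb D HsubD.
  exists i => p Hp; rewrite !Hsa; apply: (sound (HFm Z) HDk).
  apply: Hi; exact: d_hyp.
Qed.
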